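(* Let $m$ be a positive integer and $n=m(m+1)/2$. Write $\prod_{i=1}^m(1-X^i)=\sum_{i=0}^n c_iX^i$. Then the matrix $\mathsf P$ with rows indexed by integers $k\ge0$, columns indexed by non-empty subsets $S\subseteq[1,m]$, and $(k,S)$ entry $p(k,S)$, has rank $n$ over $\mathbb{Q}$. Moreover, for all $k\ge n$ and all non-empty $S\subseteq[1,m]$, $$p(k,S)=-\sum_{j=k-n}^{k-1}c_{k-j}\,p(j,S).$$
   Context: For $S\subseteq\mathbb{N}$ and $k\in\mathbb{Z}$, $p(k,S)$ is the number of partitions of $k$ all of whose parts lie in $S$ ($p(0,S)=1$). $[1,m]=\{1,\dots,m\}$. *)

(* Defs.v *)
From HB Require Import structures.
From mathcomp Require Import all_boot all_order all_algebra.
Set Implicit Arguments. Unset Strict Implicit. Unset Printing Implicit Defensive.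
Import Order.TTheory GRing.Theory Num.Theory.

(* p(k,S): the number of partitions of k all of whose parts lie in S.
   A partition of k is represented by its nonincreasing list of parts,
   padded with zeros to length exactly k (a partition of k has at most k
   parts, each at most k); this padding is a bijection. *)
Definition p (k : nat) (S : pred nat) : nat :=
  #|[set t : k.-tuple 'I_k.+1 |
      [&& sorted geq (map val t),
          sumn (map val t) == k &
          all (fun x => (x == 0) || S x) (map val t)]]|.

(* the subset of [1,m] (as a set of naturals) encoded by S : {set 'I_m},
   element i : 'I_m standing for the integer i+1 *)
Definition natset (m : nat) (S : {set 'I_m}) : pred nat :=
  fun x => [exists i in S, x == (val i).+1].

Definition nesubsets (m : nat) : {set {set 'I_m}} := [set S | S != set0].

Definition Pmat (m N : nat) : 'M[rat]_(N, #|nesubsets m|) :=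
  \matrix_(i < N, j < #|nesubsets m|)
     ((p i (natset (enum_val j)))%:R : rat).

Definition cpoly (m : nat) : {poly int} :=
  \prod_(i < m) (1 - 'X^(i.+1)).

(* Main.v *)
Require Import Defs.
From HB Require Import structures.
From mathcomp Require Import all_boot all_order all_algebra.
Set Implicit Arguments. Unset Strict Implicit. Unset Printing Implicit Defensive.
Import Order.TTheory GRing.Theory Num.Theory.

Fixpoint allseq (L N : nat) : seq (seq nat) :=
  if L is L'.+1 then flatten [seq [seq x :: s | s <- allseq L' N] | x <- iota 0 N]
  else [:: [::]].

Lemma count_allseqS L N (P : pred (seq nat)) :
  count P (allseq L.+1 N) = \sum_(0 <= x < N) count (fun s => P (x :: s)) (allseq L N).
Proof.
rewrite /= count_flatten sumnE big_map /index_iota subn0.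
rewrite big_map.
by apply: eq_bigr => x _; rewrite /= count_map.
Qed.

Lemma size_allseq L N : size (allseq L N) = N ^ L.
Proof.
elim: L => [|L IH] //; rewrite -count_predT count_allseqS.
under eq_bigr do rewrite count_predT IH.
by rewrite sum_nat_const_nat subn0 expnS.
Qed.

Lemma mem_allseq L N s : size s = L -> all (fun x => x < N) s -> s \in allseq L N.
Proof.
elim: L s => [|L IH] [|x s] //= [Hs] /andP[Hx Hall].
apply/flattenP; exists [seq x :: s | s <- allseq L N].
  by apply/mapP; exists x => //; rewrite mem_iota.
by apply/mapP; exists s => //; apply: IH.
Qed.

Lemma card_tuple_count L N (P : pred (seq nat)) :
  #|[set t : L.-tuple 'I_N | P (map val t)]| = count P (allseq L N).
Proof.
rewrite cardsE cardE /enum_mem size_filter -enumT.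
rewrite (eq_count (a2 := preim (fun t : L.-tuple 'I_N => map val (val t)) P)) //.
rewrite -count_map.
set s1 := map _ (enum _).
have U1 : uniq s1.
  rewrite map_inj_uniq ?enum_uniq // => t1 t2 /= E.
  by apply: val_inj; apply: (inj_map val_inj).
have Sub : {subset s1 <= allseq L N}.
  move=> s /mapP[t _ ->]; apply: mem_allseq; first by rewrite size_map size_tuple.
  by apply/allP => x /mapP[y _ ->]; exact: ltn_ord.
have Hle : size (allseq L N) <= size s1.
  by rewrite size_allseq size_map -cardE card_tuple card_ord.
have [Hsz Heq] := uniq_min_size U1 Sub Hle.
apply/permP; apply: uniq_perm => //.
by rewrite (uniq_size_uniq U1 Heq) Hsz.
Qed.

Local Close Scope ring_scope.

Section Cnt.
Variable S : pred nat.
Definition Tp (x : nat) := (x == 0) || S x.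
Definition good (k : nat) (s : seq nat) :=
  [&& sorted geq s, sumn s == k & all Tp s].
Definition A L B k := count (good k) (allseq L B.+1).

Lemma p_A k : p k S = A k k k.
Proof. by rewrite /p /A (card_tuple_count k k.+1 (good k)). Qed.

Lemma count_restr L M N (P : pred (seq nat)) : M <= N ->
  count (fun s => all (fun y => y < M) s && P s) (allseq L N) = count P (allseq L M).
Proof.
elim: L P => [|L IH] P HMN; first by [].
rewrite !count_allseqS.
rewrite (big_nat_widen _ _ _ _ _ HMN) big_mkcond [RHS]big_mkcond /=.
apply: eq_bigr => x _.
case: (ltnP x M) => Hx /=; first exact: IH.
by rewrite count_pred0.
Qed.

Lemma A0 B k : A 0 B k = (k == 0).
Proof. by rewrite /A /= /good /= eq_sym; case: (k == 0). Qed.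

Lemma AS L B k : A L.+1 B k = \sum_(0 <= x < B.+1 | Tp x && (x <= k)) A L x (k - x).
Proof.
rewrite /A count_allseqS [RHS]big_mkcond /=.
apply: eq_big_nat => x /andP[_ HxB].
have E : forall s, good k (x :: s) =
   (Tp x && (x <= k)) && (all (fun y => y < x.+1) s && good (k - x) s).
  move=> s; rewrite /good /= path_sortedE; last first.
    by move=> a b c /= H1 H2; apply: leq_trans H2 H1.
  have -> : all (geq x) s = all (fun y => y < x.+1) s by apply: eq_all => y.
  have -> : (x + sumn s == k) = (x <= k) && (sumn s == k - x).
    case: leqP => Hxk; first by rewrite -{1}(subnKC Hxk) eqn_add2l.
    by apply/negbTE; rewrite neq_ltn; apply/orP; right; apply: leq_trans Hxk (leq_addr _ _).
  by case: (all _ s); case: (sorted _ s); case: (x <= k); case: (sumn s == _); case: (Tp x).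
rewrite (eq_count E).
case: ifP => H.
  by rewrite -(count_restr _ _ HxB); apply: eq_count => s /=.
by rewrite count_pred0.
Qed.

Lemma Tp0 : Tp 0. Proof. by []. Qed.

Lemma AL0 L k : A L 0 k = (k == 0).
Proof.
elim: L => [|L IH]; first exact: A0.
by rewrite AS big_mkcond big_nat1 Tp0 /= subn0.
Qed.

Lemma Ak0 L B : A L B 0 = 1.
Proof.
elim: L B => [|L IH] B; first by rewrite A0.
rewrite AS big_mkcond big_nat_recl // Tp0 /= IH big1 // => i _.
by rewrite ltn0 andbF.
Qed.

Lemma AstepL L B k : k <= L -> A L.+1 B k = A L B k.
Proof.
elim: L B k => [|L IH] B k Hk.
  by move: Hk; rewrite leqn0 => /eqP ->; rewrite !Ak0.
rewrite AS [RHS]AS; apply: eq_bigr => x /andP[_ Hxk].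
case: x Hxk => [|x] Hxk; first by rewrite !AL0.
by apply: IH; rewrite leq_subLR (leq_trans Hk) // addSn ltnS leq_addl.
Qed.

Lemma AstabL L B j : j <= L -> A L B j = A j B j.
Proof.
move=> /subnKC <-; elim: (L - j) => [|d IH]; first by rewrite addn0.
by rewrite addnS AstepL ?leq_addr.
Qed.

Lemma AstabB L B k : k <= B -> A L B k = A L k k.
Proof.
move=> HkB; case: L => [|L]; first by rewrite !A0.
rewrite !AS [RHS](big_nat_widen _ _ _ _ _ (HkB : k.+1 <= B.+1)).
by apply: eq_bigl => x; rewrite ltnS; case: (x <= k); rewrite /= ?andbF ?andbT.
Qed.

Definition q B k := A k B k.

Lemma q0 k : q 0 k = (k == 0).
Proof. exact: AL0. Qed.

Lemma qS B k : q B.+1 k = q B k + (if Tp B.+1 && (B.+1 <= k) then q B.+1 (k - B.+1) else 0).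
Proof.
case: k => [|k]; first by rewrite /q !Ak0 andbF.
rewrite /q AS big_mkcond big_nat_recr //= -big_mkcond -AS.
congr (_ + _); case: ifP => // _.
by apply: AstabL; rewrite subSS leq_subr.
Qed.

Lemma q_diag B k : k <= B -> q B k = q k k.
Proof. exact: AstabB. Qed.
End Cnt.

Local Close Scope ring_scope.
Local Open Scope ring_scope.

Definition Pb (R : nzRingType) r (b : nat -> bool) : {poly R} :=
  \prod_(i < r) (if b i then 1 - 'X^(i.+1) else 1).

Definition convp (a : {poly int}) (f : nat -> int) (k : nat) : int :=
  \sum_(j < k.+1) f j * a`_(k - j).

Lemma convE a f k K : (k < K)%N -> ((\poly_(i < K) f i) * a)`_k = convp a f k.
Proof.
move=> HkK; rewrite coefM; apply: eq_bigr => j _; rewrite coef_poly.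
by rewrite (leq_ltn_trans (leq_ord j) HkK).
Qed.

Lemma coef_eq_mul (A B a : {poly int}) k :
  (forall j, (j <= k)%N -> A`_j = B`_j) -> (A * a)`_k = (B * a)`_k.
Proof. by move=> H; rewrite !coefM; apply: eq_bigr => j _; rewrite H // leq_ord. Qed.

Lemma convM a b f k : convp (a * b) f k = convp a (convp b f) k.
Proof.
rewrite -(convE _ _ (ltnSn k)) -(convE _ _ (ltnSn k)) (mulrC a) mulrA.
apply: coef_eq_mul => j Hj; rewrite coef_poly ltnS Hj.
by rewrite convE // ltnS.
Qed.

Lemma conv1 f k : convp 1 f k = f k.
Proof.
rewrite -(convE _ _ (ltnSn k)) mulr1 coef_poly ltnSn //.
Qed.

Lemma convfac (t : bool) s f k :
  convp (if t then 1 - 'X^s else 1) f k = f k - (if t && (s <= k)%N then f (k - s)%N else 0).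
Proof.
case: t => /=; last by rewrite conv1 subr0.
rewrite -(convE _ _ (ltnSn k)) mulrBr mulr1 coefB coefMXn !coef_poly ltnSn.
by case: leqP => Hs //; rewrite ltnS leq_subr.
Qed.

Lemma convdelta a k : convp a (fun j => (j == 0)%:Z) k = a`_k.
Proof.
rewrite /convp big_ord_recl /= mul1r subn0 big1 ?addr0 // => i _.
by rewrite mul0r.
Qed.

Lemma conv_ext a f g k : f =1 g -> convp a f k = convp a g k.
Proof. by move=> H; apply: eq_bigr => j _; rewrite H. Qed.

Section Gen.
Variables (m : nat) (S : {set 'I_m}).
Let Sn := natset S.

Lemma Tp_in (i : 'I_m) : Tp Sn i.+1 = (i \in S).
Proof.
rewrite /Tp /Sn /natset /=; apply/existsP/idP => [[j /andP[jS /eqP [E]]]|iS].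
  by have -> : i = j by apply: val_inj.
by exists i; rewrite iS eqxx.
Qed.

Lemma Tp_out i : (m <= i)%N -> Tp Sn i.+1 = false.
Proof.
move=> Hi; rewrite /Tp /Sn /natset /=; apply/existsP => -[j /andP[_ /eqP [E]]].
by have := ltn_ord j; rewrite -E ltnNge Hi.
Qed.

Definition fq B k : int := (q Sn B k)%:Z.

Lemma convD B k : convp (Pb _ B (fun i => Tp Sn i.+1)) (fq B) k = (k == 0)%:Z.
Proof.
elim: B k => [|B IH] k.
  by rewrite /Pb big_ord0 conv1 /fq q0.
rewrite /Pb big_ord_recr /= convM -/(Pb _ B _) -IH; apply: conv_ext => j.
by rewrite convfac /fq qS PoszD; case: ifP => _; rewrite ?addr0 ?subr0 ?addrK.
Qed.

Lemma p_q k : p k Sn = q Sn m k.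
Proof.
rewrite p_A -/(q Sn k k).
case: (leqP k m) => Hk; first by rewrite q_diag.
have : forall d, q Sn (m + d) k = q Sn m k.
  elim=> [|d IH]; first by rewrite addn0.
  by rewrite addnS qS Tp_out ?leq_addr // addn0 IH.
by move/(_ (k - m)%N); rewrite subnKC // ltnW.
Qed.

Lemma cpoly_split : cpoly m = Pb _ m (fun i => ~~ Tp Sn i.+1) * Pb _ m (fun i => Tp Sn i.+1).
Proof.
rewrite /cpoly /Pb -big_split; apply: eq_bigr => i _ /=.
by case: (Tp Sn i.+1); rewrite ?mul1r ?mulr1.
Qed.

Lemma conv_main k : convp (cpoly m) (fun j => (p j Sn)%:Z) k = (Pb _ m (fun i => ~~ Tp Sn i.+1))`_k.
Proof.
rewrite cpoly_split convM.
rewrite (@conv_ext _ _ (fun j => (j == 0)%:Z)); first by rewrite convdelta.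
move=> j; rewrite -(convD m j); apply: conv_ext => i.
by rewrite /fq p_q.
Qed.
End Gen.

Local Close Scope ring_scope.
Local Open Scope ring_scope.

Lemma size_fac (R : idomainType) (t : bool) r :
  size (if t then 1 - 'X^(r.+1) else 1 : {poly R}) = (if t then r.+2 else 1)%N.
Proof.
case: t; last by rewrite size_poly1.
by rewrite -opprB size_polyN -polyC1 size_XnsubC.
Qed.

Lemma size_Pb (R : idomainType) r b : size (Pb R r b) = (\sum_(i < r | b i) i.+1).+1%N.
Proof.
elim: r => [|r IH]; first by rewrite /Pb !big_ord0 size_poly1.
rewrite /Pb big_ord_recr /= -/(Pb R r b) [in RHS]big_mkcond big_ord_recr /= -big_mkcond.
rewrite size_mul ?IH ?size_fac.
- by case: (b r); rewrite /= ?addn1 ?addn0 // addnS.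
- by rewrite -size_poly_eq0 IH.
by rewrite -size_poly_eq0 size_fac; case: (b r).
Qed.

Lemma Pb_coef0 (R : idomainType) r b : (Pb R r b)`_0 = 1.
Proof.
elim: r => [|r IH]; first by rewrite /Pb big_ord0 coef1.
rewrite /Pb big_ord_recr /= -/(Pb R r b) coef0M IH mul1r.
by case: (b r); rewrite ?coefB coef1 ?coefXn ?subr0.
Qed.

Definition nsum m := (\sum_(i < m) i.+1)%N.

Lemma nsumE m : ((m * m.+1) %/ 2)%N = nsum m.
Proof.
rewrite /nsum divn2 mulnC -[m in (m.+1 * m)%N]/(m.+1.-1) -bin2 -bin2_sum.
by rewrite big_nat_recl // big_mkord add0n.
Qed.

Lemma cpolyE m : cpoly m = Pb int m (fun _ => true).
Proof. by []. Qed.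

Lemma sum_lt m (b : nat -> bool) (i0 : 'I_m) : ~~ b i0 ->
  (\sum_(i < m | b i) i.+1 < nsum m)%N.
Proof.
move=> Hb; rewrite /nsum [X in (_ < X)%N](bigID (fun i : 'I_m => b i)) /= -[X in (X < _)%N]addn0 ltn_add2l.
by rewrite (bigD1 i0) //= addSn.
Qed.

Lemma recur m (S : {set 'I_m}) k : (nsum m <= k)%N -> S != set0 ->
  (p k (natset S))%:Z =
    - \sum_((k - nsum m)%N <= j < k) (cpoly m)`_(k - j) * (p j (natset S))%:Z.
Proof.
move=> Hk /set0Pn [i0 i0S].
have H0 := conv_main S k.
rewrite nth_default in H0; last first.
  rewrite size_Pb; apply: leq_trans Hk; apply: (@sum_lt m (fun i => ~~ Tp (natset S) i.+1) i0).
  by rewrite negbK Tp_in.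
move: H0; rewrite /convp -(big_mkord xpredT (fun j => (p j (natset S))%:Z * (cpoly m)`_(k - j))).
rewrite big_nat_recr //= subnn cpolyE Pb_coef0 mulr1 -cpolyE.
rewrite (@big_cat_nat _ _ _ (k - nsum m)%N 0 k _ _ (leq0n _) (leq_subr _ _)) /=.
rewrite big_nat_cond big1 ?add0r; last first.
  move=> j /andP[/andP[_ Hj] _]; rewrite nth_default ?mulr0 // cpolyE size_Pb.
  have -> : (\sum_(i < m | true) i.+1 = nsum m)%N by [].
  by move: Hj; rewrite !ltn_subRL addnC.
move/eqP; rewrite addrC addr_eq0 => /eqP ->; congr (- _).
by apply: eq_bigr => j _; rewrite mulrC.
Qed.

Local Close Scope ring_scope.
Local Open Scope ring_scope.

Lemma eq_Pb (R : nzRingType) r b b' : (forall i, (i < r)%N -> b i = b' i) -> Pb R r b = Pb R r b'.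
Proof. by move=> H; apply: eq_bigr => i _; rewrite H. Qed.

Lemma PbS (R : nzRingType) r b : Pb R r.+1 b = Pb R r b * (if b r then 1 - 'X^(r.+1) else 1).
Proof. by rewrite /Pb big_ord_recr. Qed.

Lemma nsumS r : nsum r.+1 = (nsum r + r.+1)%N.
Proof. by rewrite /nsum big_ord_recr. Qed.

Lemma nsum_ge r : (r <= nsum r)%N.
Proof.
rewrite /nsum -[X in (X <= _)%N]card_ord -sum1_card.
by apply: leq_sum => i _.
Qed.

Lemma span_claim r : forall (phi : {poly rat} -> rat),
  (forall P Q, phi (P + Q) = phi P + phi Q) ->
  (forall a P, phi (a *: P) = a * phi P) ->
  (forall b, (exists2 i, (i < r)%N & ~~ b i) -> phi (Pb rat r b) = 0) ->
  forall d, (d < nsum r)%N -> phi 'X^d = 0.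
Proof.
elim: r => [|r IH] phi Hadd Hsc Hb d; first by rewrite /nsum big_ord0.
have phi0 : phi 0 = 0 by rewrite -(scale0r 0) Hsc mul0r.
have Ha : forall e, (e < nsum r)%N -> phi 'X^e = 0.
  apply: IH => // b [i Hi Hbi].
  have := Hb (fun j => if j == r then false else b j).
  rewrite PbS eqxx mulr1 (@eq_Pb _ r _ b); last by move=> j Hj; rewrite ltn_eqF.
  apply; exists i; first by apply: ltnW.
  by rewrite ltn_eqF.
have Hb2 : forall e, (e < nsum r)%N -> phi ('X^e * (1 - 'X^(r.+1))) = 0.
  apply: (IH (fun P => phi (P * (1 - 'X^(r.+1))))).
  - by move=> P Q; rewrite mulrDl Hadd.
  - by move=> a P; rewrite -scalerAl Hsc.
  move=> b [i Hi Hbi].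
  have := Hb (fun j => if j == r then true else b j).
  rewrite PbS eqxx (@eq_Pb _ r _ b); last by move=> j Hj; rewrite ltn_eqF.
  apply; exists i; first by apply: ltnW.
  by rewrite ltn_eqF.
have Hc : phi 'X^(nsum r) = 0.
  have Hex : exists2 i, (i < r.+1)%N & ~~ (i != r) by exists r; rewrite ?eqxx.
  have := Hb _ Hex.
  rewrite PbS eqxx mulr1 (@eq_Pb _ r _ (fun _ => true)); last by move=> j Hj; rewrite ltn_eqF.
  set W := Pb rat r _.
  have sW : size W = (nsum r).+1 by rewrite /W size_Pb.
  have W0 : W != 0 by rewrite -size_poly_eq0 sW.
  have lW : W`_(nsum r) != 0 by rewrite -lead_coef_eq0 lead_coefE sW in W0.
  rewrite -{1}(coefK W) poly_def (big_morph phi Hadd phi0) sW big_ord_recr /=.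
  rewrite big1 ?add0r ?Hsc; last by move=> i _; rewrite Hsc Ha ?mulr0.
  by move/eqP; rewrite mulf_eq0 (negbTE lW) /= => /eqP.
rewrite nsumS => Hd.
case: (ltngtP d (nsum r)) => Hdn; [exact: Ha | | by rewrite Hdn].
have Hrd : (r.+1 <= d)%N by apply: leq_ltn_trans (nsum_ge r) Hdn.
have He : (d - r.+1 < nsum r)%N by rewrite ltn_subLR // addnC.
have := Hb2 _ He; rewrite mulrBr mulr1 -exprD subnK // => /eqP.
rewrite -scaleN1r Hadd Hsc (Ha _ He) mulN1r => /eqP H.
by move: H; rewrite GRing.add0r => /eqP; rewrite oppr_eq0 => /eqP.
Qed.

Local Close Scope ring_scope.
Local Open Scope ring_scope.

Lemma map_Pb r b : map_poly (intr : int -> rat) (Pb int r b) = Pb rat r b.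
Proof.
rewrite /Pb rmorph_prod; apply: eq_bigr => i _.
case: (b i); rewrite ?rmorphB ?rmorph1 ?rmorphXn /= ?map_polyX; reflexivity.
Qed.

Lemma rank_le m N : (\rank (Pmat m N) <= nsum m)%N.
Proof.
set n := nsum m.
have Hrow : forall k, (\row_(j < #|nesubsets m|) ((p k (natset (enum_val j)))%:R : rat) <= Pmat m n)%MS.
  elim/ltn_ind => k IH.
  case: (ltnP k n) => Hk.
    have -> : \row_(j < #|nesubsets m|) ((p k (natset (enum_val j)))%:R : rat)
            = row (Ordinal Hk) (Pmat m n) by apply/rowP => j; rewrite !mxE.
    exact: row_sub.
  have -> : \row_(j < #|nesubsets m|) ((p k (natset (enum_val j)))%:R : rat)
      = - \sum_((k - n)%N <= i < k) ((cpoly m)`_(k - i))%:~R *: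
           \row_(j < #|nesubsets m|) ((p i (natset (enum_val j)))%:R : rat).
    apply/rowP => j; rewrite !mxE summxE.
    have Hj : enum_val j != set0 by have := enum_valP j; rewrite inE.
    have := congr1 (fun z : int => (z%:~R : rat)) (recur Hk Hj).
    rewrite /= rmorphN rmorph_sum /= pmulrn => ->; congr (- _).
    by apply: eq_bigr => i _; rewrite rmorphM !mxE.
  rewrite eqmx_opp big_nat_cond; apply: summx_sub => i /andP[/andP[_ Hi] _].
  by apply: scalemx_sub; apply: IH.
have Hsub : (Pmat m N <= Pmat m n)%MS.
  apply/row_subP => i.
  have -> : row i (Pmat m N) = \row_(j < #|nesubsets m|) ((p i (natset (enum_val j)))%:R : rat).
    by apply/rowP => j; rewrite !mxE.
  exact: Hrow.
exact: leq_trans (mxrankS Hsub) (rank_leq_row _).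
Qed.

Lemma rank_eq m : \rank (Pmat m (nsum m)) = nsum m.
Proof.
apply/eqP; rewrite eqn_leq rank_leq_row /=.
set n := nsum m.
pose L : 'M[rat]_n := \matrix_(i, k) (if (k <= i)%N then ((cpoly m)`_(i - k))%:~R else 0).
pose M2 := L *m Pmat m n.
apply: leq_trans (mxrankM_maxr L (Pmat m n)).
have M2E : forall i j, M2 i j = ((Pb int m (fun t => ~~ Tp (natset (enum_val j)) t.+1))`_i)%:~R.
  move=> i j; rewrite !mxE -conv_main /convp.
  rewrite (big_ord_widen _ (fun k => (p k (natset (enum_val j)))%:Z * (cpoly m)`_(i - k))
             (ltn_ord i : (i.+1 <= n)%N)).
  rewrite rmorph_sum /= [RHS]big_mkcond /=; apply: eq_bigr => k _; rewrite !mxE ltnS.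
  by case: (k <= i)%N; rewrite ?mul0r // rmorphM /= mulrC pmulrn.
have Hker : forall v : 'rV_n, v *m M2 = 0 -> v = 0.
  move=> v Hv.
  pose phi (P : {poly rat}) := \sum_(i < n) v 0 i * P`_i.
  have Hadd : forall P Q, phi (P + Q) = phi P + phi Q.
    by move=> P Q; rewrite /phi -big_split; apply: eq_bigr => i _; rewrite coefD mulrDr.
  have Hsc : forall a P, phi (a *: P) = a * phi P.
    by move=> a P; rewrite /phi mulr_sumr; apply: eq_bigr => i _; rewrite coefZ mulrCA.
  have Hb : forall b, (exists2 i, (i < m)%N & ~~ b i) -> phi (Pb rat m b) = 0.
    move=> b [i0 Hi0 Hbi0].
    pose S := [set i : 'I_m | ~~ b i].
    have HS : S \in nesubsets m.
      by rewrite inE; apply/set0Pn; exists (Ordinal Hi0); rewrite inE.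
    pose j := enum_rank_in HS S.
    have ej : enum_val j = S := @enum_rankK_in _ S _ HS S HS.
    have := congr1 (fun A : 'M[rat]_(1, #|nesubsets m|) => A 0 j) Hv; rewrite !mxE => <-.
    apply: eq_bigr => i _; rewrite M2E ej; congr (_ * _).
    rewrite -(map_Pb m b) coef_map /=.
    congr ((_ : {poly int})`_i)%:~R.
    apply: eq_Pb => t Ht; rewrite (Tp_in S (Ordinal Ht)) inE negbK //.
  have Hx := span_claim Hadd Hsc Hb.
  apply/rowP => i; rewrite mxE; have := Hx i (ltn_ord i).
  rewrite /phi (bigD1 i) //= coefXn eqxx mulr1 big1 ?addr0 // => k Hk.
  by rewrite coefXn (_ : (k == i :> nat) = false) ?mulr0 //; exact: negbTE Hk.
have K0 : kermx M2 = 0.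
  apply/row_matrixP => r; rewrite row0; apply: Hker.
  by rewrite -row_mul mulmx_ker row0.
have := mxrank_ker M2; rewrite K0 mxrank0 => /esym /eqP; rewrite subn_eq0.
by [].
Qed.

Local Close Scope ring_scope.
Theorem theoremA (m : nat) (hm : (0 < m)%N) :
  let n := (m * m.+1) %/ 2 in
  let c := fun i : nat => ((cpoly m)`_i)%R in
  ((forall N : nat, (\rank (Pmat m N) <= n)%N) /\
   (exists N : nat, \rank (Pmat m N) = n)) /\
  (forall (k : nat) (S : {set 'I_m}), (n <= k)%N -> S != set0 ->
     ((p k (natset S))%:Z =
      - \sum_((k - n)%N <= j < k) c (k - j)%N * (p j (natset S))%:Z)%R).
Proof.
move=> n c; rewrite /n nsumE.
split; [split|].
- by move=> N; exact: rank_le.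
- by exists (nsum m); exact: rank_eq.
- by move=> k S Hk HS; exact: recur.
Qed.
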